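(* Let $F\subseteq\mathbb{R}$ be a countable subfield of $\mathbb{R}$ that is closed under Turing equivalence. Then there is a set $\mathcal{C}$ of Turing degrees, linearly ordered by $\le_T$, such that $F=\mathbb{R}_{\wedge\mathcal{C}}$, the set of all reals computable from some real whose degree lies in $\mathcal{C}$.
   Context: A set of reals is closed under Turing equivalence if it contains every real Turing equivalent to one of its elements. *)

(* Defs.v *)
From Stdlib Require Import Reals QArith Qreals List Cantor.
Import ListNotations.
Open Scope R_scope.

(* Codes for partial recursive functions with an oracle, in Kleene's style.
   Functions take a list of natural-number arguments (missing arguments
   default to 0). *)
Inductive code : Type :=
  | cZero : code
  | cSucc : code
  | cProj : nat -> code
  | cOrc  : code
  | cComp : code -> codes -> code
  | cPrec : code -> code -> code
  | cMu   : code -> code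
with codes : Type :=
  | cnil : codes
  | ccons : code -> codes -> codes.

Definition b2n (b : bool) : nat := if b then 1%nat else 0%nat.

Inductive eval (o : nat -> bool) : code -> list nat -> nat -> Prop :=
  | ev_zero : forall v, eval o cZero v 0
  | ev_succ : forall v, eval o cSucc v (S (hd 0%nat v))
  | ev_proj : forall i v, eval o (cProj i) v (nth i v 0%nat)
  | ev_orc  : forall v, eval o cOrc v (b2n (o (hd 0%nat v)))
  | ev_comp : forall f gs v ws y,
      evals o gs v ws -> eval o f ws y -> eval o (cComp f gs) v y
  | ev_prec0 : forall f g v y,
      eval o f v y -> eval o (cPrec f g) (0%nat :: v) y
  | ev_precS : forall f g n v z y,
      eval o (cPrec f g) (n :: v) z -> eval o g (n :: z :: v) y ->
      eval o (cPrec f g) (S n :: v) y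
  | ev_mu : forall f v y,
      eval o f (y :: v) 0 ->
      (forall k, (k < y)%nat -> exists m, eval o f (k :: v) (S m)) ->
      eval o (cMu f) v y
with evals (o : nat -> bool) : codes -> list nat -> list nat -> Prop :=
  | evs_nil : forall v, evals o cnil v []
  | evs_cons : forall g gs v w ws,
      eval o g v w -> evals o gs v ws -> evals o (ccons g gs) v (w :: ws).

Definition turing_le (A B : nat -> bool) : Prop :=
  exists c : code, forall n : nat, eval B c [n] (b2n (A n)).

Definition turing_eqv (A B : nat -> bool) : Prop :=
  turing_le A B /\ turing_le B A.

Definition qenum (n : nat) : Q :=
  let (a, b) := Cantor.of_nat n in
  let (s, m) := Cantor.of_nat a in
  Qmake (if Nat.even s then Z.of_nat m else (- Z.of_nat m)%Z) (Pos.of_succ_nat b).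

(* The (lower) Dedekind cut of a real x, coded as a set of naturals:
   n is in the cut iff the n-th rational is < x.  The Turing degree of x is
   the Turing degree of this set. *)
Definition cut (x : R) : nat -> bool :=
  fun n => if Rlt_dec (Q2R (qenum n)) x then true else false.

Definition real_turing_le (x y : R) : Prop := turing_le (cut x) (cut y).
Definition real_turing_eqv (x y : R) : Prop := turing_eqv (cut x) (cut y).

Definition is_degree (D : (nat -> bool) -> Prop) : Prop :=
  exists A, forall B, D B <-> turing_eqv B A.

Definition degree_le (D1 D2 : (nat -> bool) -> Prop) : Prop :=
  exists A B, D1 A /\ D2 B /\ turing_le A B.

Definition reals_below (C : ((nat -> bool) -> Prop) -> Prop) (x : R) : Prop :=
  exists D, C D /\ exists y : R, D (cut y) /\ real_turing_le x y.

Definition is_subfield (F : R -> Prop) : Prop :=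
  F 0 /\ F 1 /\
  (forall x y, F x -> F y -> F (x + y)) /\
  (forall x, F x -> F (- x)) /\
  (forall x y, F x -> F y -> F (x * y)) /\
  (forall x, F x -> x <> 0 -> F (/ x)).

Definition countable_set (F : R -> Prop) : Prop :=
  exists e : nat -> R, forall x, F x <-> exists n, e n = x.

Definition closed_under_turing_eqv (F : R -> Prop) : Prop :=
  forall x y, F x -> real_turing_eqv x y -> F y.

(* Main.v *)
Require Import Defs.
From Stdlib Require Import Reals.
Open Scope R_scope.

From Coquelicot Require Import Coquelicot.
From Stdlib Require Import Lra Lia List Arith Cantor QArith Qreals ZArith Classical ClassicalEpsilon.

Module M1.
Import ListNotations.
Local Open Scope nat_scope.

Section Frame.
Variable o : nat -> bool.

Definition Cg {A : Type} (inp : A -> list nat) (f : A -> nat) : Prop :=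
  exists c, forall a, eval o c (inp a) (f a).

Definition in1 (x : nat) : list nat := [x].
Definition in2 (p : nat * nat) : list nat := [fst p; snd p].
Definition in3 (p : nat * nat * nat) : list nat := [fst (fst p); snd (fst p); snd p].

Definition K1 (f : nat -> nat) := Cg in1 f.
Definition K2 (f : nat -> nat -> nat) := Cg in2 (fun p => f (fst p) (snd p)).
Definition K3 (f : nat -> nat -> nat -> nat) :=
  Cg in3 (fun p => f (fst (fst p)) (snd (fst p)) (snd p)).

Lemma Cg_ext {A} inp (f g : A -> nat) : Cg inp f -> (forall a, f a = g a) -> Cg inp g.
Proof. intros [c Hc] E. exists c. intros a. rewrite <- E. apply Hc. Qed.

Lemma Cg_const {A} (inp : A -> list nat) k : Cg inp (fun _ => k).
Proof.
  induction k as [|k [c Hc]].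
  - exists cZero. intros; constructor.
  - exists (cComp cSucc (ccons c cnil)). intros a.
    econstructor. econstructor. apply Hc. constructor.
    change (S k) with (S (hd 0 [k])). constructor.
Qed.

Lemma Cg_proj {A} (inp : A -> list nat) i : Cg inp (fun a => nth i (inp a) 0).
Proof. exists (cProj i). intros; constructor. Qed.

Lemma comp1 {A} (inp : A -> list nat) f g : K1 f -> Cg inp g -> Cg inp (fun a => f (g a)).
Proof.
  intros [cf Hf] [cg Hg]. exists (cComp cf (ccons cg cnil)). intros a.
  econstructor. econstructor. apply Hg. constructor. apply (Hf (g a)).
Qed.

Lemma comp2 {A} (inp : A -> list nat) f g h : K2 f -> Cg inp g -> Cg inp h ->
  Cg inp (fun a => f (g a) (h a)).
Proof.
  intros [cf Hf] [cg Hg] [ch Hh]. exists (cComp cf (ccons cg (ccons ch cnil))). intros a.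
  econstructor. econstructor. apply Hg. econstructor. apply Hh. constructor.
  apply (Hf (g a, h a)).
Qed.

Lemma comp3 {A} (inp : A -> list nat) f g h k : K3 f -> Cg inp g -> Cg inp h -> Cg inp k ->
  Cg inp (fun a => f (g a) (h a) (k a)).
Proof.
  intros [cf Hf] [cg Hg] [ch Hh] [ck Hk].
  exists (cComp cf (ccons cg (ccons ch (ccons ck cnil)))). intros a.
  econstructor. econstructor. apply Hg. econstructor. apply Hh. econstructor. apply Hk.
  constructor.
  apply (Hf (g a, h a, k a)).
Qed.

Lemma C1_succ : K1 S.
Proof. exists cSucc. intros a. apply (ev_succ o [a]). Qed.

Lemma C1_orc : K1 (fun x => b2n (o x)).
Proof. exists cOrc. intros a. apply (ev_orc o [a]). Qed.

Lemma prec1 a g : K2 g -> K1 (fun n => nat_rec (fun _ => nat) a g n).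
Proof.
  intros [cg Hg]. destruct (Cg_const (fun _ : unit => @nil nat) a) as [ca Ha].
  exists (cPrec ca cg). intros n. unfold in1. induction n.
  - constructor. apply (Ha tt).
  - simpl. econstructor. apply IHn. apply (Hg (n, _)).
Qed.

Lemma prec2 a g : K1 a -> K3 g ->
  K2 (fun n x => nat_rec (fun _ => nat) (a x) (fun k z => g k z x) n).
Proof.
  intros [ca Ha] [cg Hg].
  exists (cPrec ca cg). intros [n x]. unfold in2; simpl. induction n.
  - constructor. apply (Ha x).
  - simpl. econstructor. apply IHn. apply (Hg (n, _, x)).
Qed.

Lemma mu1 f : K2 f -> (forall x, exists y, f y x = 0) ->
  exists g, K1 g /\ forall x, f (g x) x = 0 /\ (forall k, k < g x -> f k x <> 0).
Proof.
  intros [cf Hf] Ex.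
  assert (G : forall x, {y | f y x = 0 /\ forall k, k < y -> f k x <> 0}).
  { intros x. apply constructive_indefinite_description.
    destruct (Ex x) as [y Hy].
    destruct (Wf_nat.dec_inh_nat_subset_has_unique_least_element (fun y => f y x = 0))
      as [z [[Hz1 Hz2] _]].
    - intros n; destruct (Nat.eq_dec (f n x) 0); auto.
    - eauto.
    - exists z; split; auto. intros k Hk E. specialize (Hz2 k E). lia. }
  exists (fun x => proj1_sig (G x)). split.
  - exists (cMu cf). intros x. destruct (G x) as [y [H1 H2]]; simpl.
    constructor.
    + rewrite <- H1. apply (Hf (y, x)).
    + intros k Hk. exists (pred (f k x)). specialize (H2 k Hk).
      replace (S (pred (f k x))) with (f k x) by lia. apply (Hf (k, x)).
  - intros x. destruct (G x) as [y H]; exact H.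
Qed.

End Frame.

End M1.
Import M1.

Module M2.
Local Unset Asymmetric Patterns.
Import ListNotations.
Local Open Scope nat_scope.

Fixpoint sbc (d : code) (c : code) : code :=
  match c with
  | cOrc => cComp d (ccons (cProj 0) cnil)
  | cComp f gs => cComp (sbc d f) (sbcs d gs)
  | cPrec f g => cPrec (sbc d f) (sbc d g)
  | cMu f => cMu (sbc d f)
  | x => x
  end
with sbcs (d : code) (gs : codes) : codes :=
  match gs with
  | cnil => cnil
  | ccons g gs => ccons (sbc d g) (sbcs d gs)
  end.

Section Sub.
Variables (B C : nat -> bool) (d : code).
Hypothesis Hd : forall x, eval C d [x] (b2n (B x)).

Fixpoint sbc_ok c v y (H : eval B c v y) {struct H} : eval C (sbc d c) v y :=
  match H in eval _ c v y return eval C (sbc d c) v y with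
  | ev_zero _ v => ev_zero C v
  | ev_succ _ v => ev_succ C v
  | ev_proj _ i v => ev_proj C i v
  | ev_orc _ v => ev_comp C d (ccons (cProj 0) cnil) v [hd 0 v] _
        (evs_cons C (cProj 0) cnil v (hd 0 v) [] 
           (match v return eval C (cProj 0) v (hd 0 v) with
            | [] => ev_proj C 0 [] | a :: w => ev_proj C 0 (a :: w) end)
           (evs_nil C v)) (Hd (hd 0 v))
  | ev_comp _ f gs v ws y H1 H2 => ev_comp C _ _ v ws y (sbcs_ok gs v ws H1) (sbc_ok f ws y H2)
  | ev_prec0 _ f g v y H1 => ev_prec0 C _ _ v y (sbc_ok f v y H1)
  | ev_precS _ f g n v z y H1 H2 =>
      ev_precS C _ _ n v z y (sbc_ok (cPrec f g) (n :: v) z H1) (sbc_ok g _ y H2)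
  | ev_mu _ f v y H1 H2 =>
      ev_mu C _ v y (sbc_ok f _ 0 H1)
        (fun k hk => match H2 k hk with
                     | ex_intro _ m Hm => ex_intro _ m (sbc_ok f _ _ Hm) end)
  end
with sbcs_ok gs v ws (H : evals B gs v ws) {struct H} : evals C (sbcs d gs) v ws :=
  match H in evals _ gs v ws return evals C (sbcs d gs) v ws with
  | evs_nil _ v => evs_nil C v
  | evs_cons _ g gs v w ws H1 H2 => evs_cons C _ _ v w ws (sbc_ok g v w H1) (sbcs_ok gs v ws H2)
  end.
End Sub.

Lemma turing_le_trans A B C : turing_le A B -> turing_le B C -> turing_le A C.
Proof.
  intros [c Hc] [d Hd]. exists (sbc d c). intros n. apply (sbc_ok B C d Hd). apply Hc.
Qed.

Lemma turing_le_refl A : turing_le A A.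
Proof. exists cOrc. intros n. apply (ev_orc A [n]). Qed.

End M2.
Import M2.

Module M3.
Import ListNotations.
Local Open Scope nat_scope.

Definition sgf (n : nat) : nat := match n with 0 => 0 | _ => 1 end.
Definition tri (s : nat) : nat := nat_rec (fun _ => nat) 0 (fun i m => S i + m) s.
Definition evn (s : nat) : nat := if Nat.even s then 1 else 0.
Definition cs (n : nat) : nat := fst (of_nat n) + snd (of_nat n).

Section Arith.
Variable o : nat -> bool.

Lemma C1_id : K1 o (fun x => x).
Proof. exact (Cg_proj o in1 0). Qed.
Lemma C2_p0 : K2 o (fun x y => x).
Proof. exact (Cg_proj o in2 0). Qed.
Lemma C2_p1 : K2 o (fun x y => y).
Proof. exact (Cg_proj o in2 1). Qed.
Lemma C3_p0 : K3 o (fun x y z => x).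
Proof. exact (Cg_proj o in3 0). Qed.
Lemma C3_p1 : K3 o (fun x y z => y).
Proof. exact (Cg_proj o in3 1). Qed.
Lemma C3_p2 : K3 o (fun x y z => z).
Proof. exact (Cg_proj o in3 2). Qed.

Lemma C2_add : K2 o Nat.add.
Proof.
  eapply Cg_ext.
  - exact (prec2 o (fun x => x) (fun k z x => S z) C1_id (comp1 o in3 _ _ (C1_succ o) C3_p1)).
  - intros [n x]; simpl. induction n; simpl; auto.
Qed.

Lemma C2_mul : K2 o Nat.mul.
Proof.
  eapply Cg_ext.
  - exact (prec2 o (fun x => 0) (fun k z x => z + x) (Cg_const o in1 0)
             (comp2 o in3 _ _ _ C2_add C3_p1 C3_p2)).
  - intros [n x]; simpl. induction n; simpl; auto. rewrite IHn. lia.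
Qed.

Lemma C1_pred : K1 o pred.
Proof.
  eapply Cg_ext.
  - exact (prec1 o 0 (fun k z => k) C2_p0).
  - intros [|n]; reflexivity.
Qed.

Lemma C2_sub : K2 o Nat.sub.
Proof.
  assert (H : K2 o (fun n x => x - n)).
  { eapply Cg_ext.
    - exact (prec2 o (fun x => x) (fun k z x => pred z) C1_id (comp1 o in3 _ _ C1_pred C3_p1)).
    - intros [n x]; simpl. induction n; simpl. lia. rewrite IHn. lia. }
  eapply Cg_ext. exact (comp2 o in2 _ _ _ H C2_p1 C2_p0). intros [x y]; reflexivity.
Qed.

Lemma C1_sg : K1 o sgf.
Proof.
  eapply Cg_ext. exact (prec1 o 0 (fun _ _ => 1) (Cg_const o in2 1)).
  intros [|n]; reflexivity.
Qed.

Lemma C2_ltb : K2 o (fun x y => b2n (x <? y)).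
Proof.
  eapply Cg_ext. exact (comp1 o in2 _ _ C1_sg (comp2 o in2 _ _ _ C2_sub C2_p1 C2_p0)).
  intros [x y]; simpl. destruct (Nat.ltb_spec x y).
  - destruct (y - x) eqn:E; simpl; auto; lia.
  - replace (y - x) with 0 by lia. reflexivity.
Qed.

Lemma C2_leb : K2 o (fun x y => b2n (x <=? y)).
Proof.
  eapply Cg_ext. exact (comp2 o in2 _ _ _ C2_ltb C2_p0 (comp1 o in2 _ _ (C1_succ o) C2_p1)).
  intros [x y]; simpl. destruct (Nat.ltb_spec x (S y)); destruct (Nat.leb_spec x y); auto; lia.
Qed.

Lemma C2_eqb : K2 o (fun x y => b2n (x =? y)).
Proof.
  eapply Cg_ext. exact (comp2 o in2 _ _ _ C2_mul (comp2 o in2 _ _ _ C2_leb C2_p0 C2_p1)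
                                               (comp2 o in2 _ _ _ C2_leb C2_p1 C2_p0)).
  intros [x y]; simpl. destruct (Nat.eqb_spec x y); destruct (Nat.leb_spec x y);
    destruct (Nat.leb_spec y x); simpl; auto; lia.
Qed.

Lemma C1_pow4 : K1 o (fun k => 4 ^ k).
Proof.
  eapply Cg_ext. exact (prec1 o 1 (fun _ z => 4 * z) (comp2 o in2 _ _ _ C2_mul (Cg_const o in2 4) C2_p1)).
  intros n; simpl. induction n; simpl; auto.
Qed.

Lemma C1_tri : K1 o tri.
Proof.
  eapply Cg_ext. exact (prec1 o 0 (fun i m => S i + m)
     (comp2 o in2 _ _ _ C2_add (comp1 o in2 _ _ (C1_succ o) C2_p0) C2_p1)).
  intros n; reflexivity.
Qed.

Lemma C1_evn : K1 o evn.
Proof.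
  eapply Cg_ext. exact (prec1 o 1 (fun _ z => 1 - z) (comp2 o in2 _ _ _ C2_sub (Cg_const o in2 1) C2_p1)).
  intros n; simpl. induction n; simpl; auto. rewrite IHn. unfold evn.
  rewrite Nat.even_succ, <- Nat.negb_even. destruct (Nat.even n); reflexivity.
Qed.

Lemma tri_S s : tri (S s) = S s + tri s.
Proof. reflexivity. Qed.

Lemma tri_mono k s : k <= s -> tri k <= tri s.
Proof. induction 1; auto. rewrite tri_S. lia. Qed.

Lemma of_nat_spec n : n = snd (of_nat n) + tri (cs n).
Proof.
  unfold cs. pose proof (cancel_to_of n) as E. destruct (of_nat n) as [x y]. simpl.
  simpl in E. unfold tri. rewrite (Nat.add_comm x y). rewrite <- E at 1. reflexivity.
Qed.

Lemma mu_unique f (g h : nat -> nat) x :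
  f (g x) x = 0 -> (forall k, k < g x -> f k x <> 0) ->
  f (h x) x = 0 -> (forall k, k < h x -> f k x <> 0) -> g x = h x.
Proof.
  intros A1 A2 B1 B2. destruct (Nat.lt_trichotomy (g x) (h x)) as [L|[L|L]]; auto.
  - exfalso; eapply B2; eauto.
  - exfalso; eapply A2; eauto.
Qed.

Lemma C1_cs : K1 o cs.
Proof.
  set (f := fun s n => 1 - sgf (tri (S s) - n)).
  assert (Cf : K2 o f).
  { unfold f. exact (comp2 o in2 _ _ _ C2_sub (Cg_const o in2 1)
       (comp1 o in2 _ _ C1_sg (comp2 o in2 _ _ _ C2_sub
          (comp1 o in2 _ _ C1_tri (comp1 o in2 _ _ (C1_succ o) C2_p0)) C2_p1))). }
  assert (Hf : forall s n, f s n = 0 <-> n < tri (S s)).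
  { intros s n; unfold f. destruct (tri (S s) - n) eqn:E; unfold sgf; lia. }
  assert (Hc : forall n, f (cs n) n = 0 /\ forall k, k < cs n -> f k n <> 0).
  { intros n. pose proof (of_nat_spec n) as E. assert (snd (of_nat n) <= cs n) by (unfold cs; lia).
    split.
    - apply Hf. rewrite tri_S. lia.
    - intros k Hk. rewrite Hf. pose proof (tri_mono (S k) (cs n)). lia. }
  destruct (mu1 o f Cf) as [g [Cg' Hg]].
  { intros n; exists (cs n); apply Hc. }
  eapply Cg_ext. exact Cg'. intros n. 
  apply (mu_unique f g cs n); try apply Hg; apply Hc.
Qed.

Lemma C1_osnd : K1 o (fun n => snd (of_nat n)).
Proof.
  eapply Cg_ext. exact (comp2 o in1 _ _ _ C2_sub C1_id (comp1 o in1 _ _ C1_tri C1_cs)).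
  intros n; simpl. pose proof (of_nat_spec n). lia.
Qed.

Lemma C1_ofst : K1 o (fun n => fst (of_nat n)).
Proof.
  eapply Cg_ext. exact (comp2 o in1 _ _ _ C2_sub C1_cs C1_osnd).
  intros n; simpl. unfold cs. lia.
Qed.

Lemma C2_tonat : K2 o (fun x y => to_nat (x, y)).
Proof.
  eapply Cg_ext. exact (comp2 o in2 _ _ _ C2_add C2_p1 (comp1 o in2 _ _ C1_tri
                          (comp2 o in2 _ _ _ C2_add C2_p1 C2_p0))).
  intros [x y]; reflexivity.
Qed.

Lemma C1_div2 : K1 o Nat.div2.
Proof.
  set (f := fun k n => 1 - sgf (2 * k + 2 - n)).
  assert (Cf : K2 o f).
  { unfold f. exact (comp2 o in2 _ _ _ C2_sub (Cg_const o in2 1)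
       (comp1 o in2 _ _ C1_sg (comp2 o in2 _ _ _ C2_sub
          (comp2 o in2 _ _ _ C2_add (comp2 o in2 _ _ _ C2_mul (Cg_const o in2 2) C2_p0)
             (Cg_const o in2 2)) C2_p1))). }
  assert (Hf : forall s n, f s n = 0 <-> n < 2 * s + 2).
  { intros s n; unfold f. destruct (2 * s + 2 - n) eqn:E; unfold sgf; lia. }
  assert (Hc : forall n, f (Nat.div2 n) n = 0 /\ forall k, k < Nat.div2 n -> f k n <> 0).
  { intros n. pose proof (Nat.div2_odd n) as E. destruct (Nat.odd n); simpl in E.
    all: split; [apply Hf; lia| intros k Hk; rewrite Hf; lia]. }
  destruct (mu1 o f Cf) as [g [Cg' Hg]].
  { intros n; exists (Nat.div2 n); apply Hc. }
  eapply Cg_ext. exact Cg'. intros n.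
  apply (mu_unique f g Nat.div2 n); try apply Hg; apply Hc.
Qed.

End Arith.

End M3.
Import M3.

Module M4.
Open Scope R_scope.

Definition term (S : nat -> bool) (k : nat) : R := INR (b2n (S k)) / 4 ^ (Datatypes.S k).
Definition natM (S : nat -> bool) (k : nat) : nat :=
  nat_rec (fun _ => nat) 0%nat (fun k M => 4 * M + b2n (S k))%nat k.
Definition val (S : nat -> bool) : R := Series (term S).
Definition rtail (S : nat -> bool) (k : nat) : R := Series (fun j => term S (k + j)).

Lemma pow4_pos k : 0 < 4 ^ k.
Proof. apply pow_lt; lra. Qed.

Lemma term_bounds S k : 0 <= term S k <= / 4 ^ (Datatypes.S k).
Proof.
  unfold term. pose proof (pow4_pos (Datatypes.S k)).
  destruct (S k); simpl b2n; simpl INR; split.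
  - apply Rlt_le, Rdiv_lt_0_compat; lra.
  - unfold Rdiv; lra.
  - unfold Rdiv; rewrite Rmult_0_l; lra.
  - unfold Rdiv; rewrite Rmult_0_l. apply Rlt_le, Rinv_0_lt_compat; lra.
Qed.

Lemma geom_bound k j : / 4 ^ (Datatypes.S (k + j)) = / 4 ^ (Datatypes.S k) * (/ 4) ^ j.
Proof.
  rewrite <- Rinv_pow by lra. rewrite <- Rinv_mult. f_equal.
  rewrite <- pow_add. reflexivity.
Qed.

Lemma ex_tail S k : ex_series (fun j => term S (k + j)).
Proof.
  apply (ex_series_le (V := R_CompleteNormedModule) _ (fun j => / 4 ^ (Datatypes.S k) * (/ 4) ^ j)).
  - intros j. change (norm (term S (k + j))) with (Rabs (term S (k + j))).
    rewrite <- geom_bound. destruct (term_bounds S (k + j)). rewrite Rabs_right; lra.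
  - apply (ex_series_scal_l (V := R_NormedModule)). apply ex_series_geom. rewrite Rabs_right; lra.
Qed.

Lemma ex_val S : ex_series (term S).
Proof. apply (ex_series_ext (fun j => term S (0 + j))). reflexivity. apply ex_tail. Qed.

Lemma Series_zero : Series (fun _ => 0) = 0.
Proof.
  rewrite (Series_ext _ (fun n => 0 * 0)) by (intros; ring).
  rewrite (Series_scal_l 0 (fun _ => 0)). ring.
Qed.

Lemma rtail_bounds S k : 0 <= rtail S k <= / 4 ^ k / 3.
Proof.
  split.
  - rewrite <- Series_zero. unfold rtail. apply Series_le.
    intros; split; [lra| apply term_bounds]. apply ex_tail.
  - unfold rtail.
    apply Rle_trans with (Series (fun j => / 4 ^ (Datatypes.S k) * (/ 4) ^ j)).
    + apply Series_le. intros j; rewrite <- geom_bound; apply term_bounds.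
      apply (ex_series_scal_l (V := R_NormedModule)). apply ex_series_geom. rewrite Rabs_right; lra.
    + rewrite Series_scal_l, Series_geom by (rewrite Rabs_right; lra).
      pose proof (pow4_pos k). simpl pow. right. field. lra.
Qed.

Lemma rtail_rec S k : rtail S k = term S k + rtail S (Datatypes.S k).
Proof.
  unfold rtail. rewrite Series_incr_1 by apply ex_tail. rewrite Nat.add_0_r. f_equal.
  apply Series_ext. intros n. f_equal. lia.
Qed.

Lemma val_split S k : val S = INR (natM S k) / 4 ^ k + rtail S k.
Proof.
  induction k.
  - simpl. unfold val, rtail. rewrite (Series_ext (fun j => term S (0 + j)) (term S)) by reflexivity.
    field.
  - rewrite IHk, rtail_rec. unfold term. simpl natM.
    rewrite !plus_INR. simpl (INR 0). pose proof (pow4_pos k). simpl pow. field. lra.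
Qed.

Definition Jn (A B : nat -> bool) (n : nat) : bool :=
  if Nat.even n then A (Nat.div2 n) else B (Nat.div2 n).
Definition Zs : nat -> bool := fun _ => false.

Lemma val_J A B : val (Jn A B) = val (Jn A Zs) + val (Jn Zs B).
Proof.
  unfold val. rewrite <- Series_plus by apply ex_val. apply Series_ext. intros n.
  unfold term, Jn, Zs. destruct (Nat.even n); [destruct (A _)| destruct (B _)]; simpl; field;
   pose proof (pow4_pos n); lra.
Qed.

End M4.
Import M4.

Module M5.
Open Scope R_scope.

Definition qa n := fst (of_nat n).
Definition qb n := snd (of_nat n).
Definition qs n := fst (of_nat (qa n)).
Definition qm n := snd (of_nat (qa n)).
Definition negf n := ((1 - evn (qs n)) * sgf (qm n))%nat.
Definition idx (m b : nat) : nat := to_nat (to_nat (0%nat, m), b).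

Lemma IZR_succ_pos b : IZR (Z.pos (Pos.of_succ_nat b)) = INR (Datatypes.S b).
Proof. rewrite Zpos_P_of_succ_nat, <- Nat2Z.inj_succ, <- INR_IZR_INZ. reflexivity. Qed.

Lemma qenum_val n : Q2R (qenum n) =
  (if Nat.even (qs n) then INR (qm n) else - INR (qm n)) / INR (Datatypes.S (qb n)).
Proof.
  unfold qenum, qs, qm, qa, qb. destruct (of_nat n) as [a b]. simpl.
  destruct (of_nat a) as [s m]. simpl. unfold Q2R. simpl Qnum. simpl Qden.
  rewrite IZR_succ_pos. destruct (Nat.even s).
  - rewrite <- INR_IZR_INZ. reflexivity.
  - rewrite opp_IZR, <- INR_IZR_INZ. reflexivity.
Qed.

Lemma qenum_idx m b : Q2R (qenum (idx m b)) = INR m / INR (Datatypes.S b).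
Proof.
  unfold qenum, idx. rewrite !cancel_of_to. unfold Q2R. simpl Qnum. simpl Qden.
  rewrite IZR_succ_pos, <- INR_IZR_INZ. reflexivity.
Qed.

Lemma INR_S_pos b : 0 < INR (Datatypes.S b).
Proof. apply lt_0_INR. lia. Qed.

Lemma negf_01 n : negf n = 0%nat \/ negf n = 1%nat.
Proof. unfold negf, evn, sgf. destruct (Nat.even (qs n)); destruct (qm n); simpl; lia. Qed.

Lemma negf_0 n : negf n = 0%nat -> Q2R (qenum n) = INR (qm n) / INR (Datatypes.S (qb n)).
Proof.
  intros H. rewrite qenum_val. unfold negf, evn, sgf in H.
  destruct (Nat.even (qs n)); auto. destruct (qm n); simpl in H; try lia.
  simpl. f_equal. ring.
Qed.

Lemma negf_1 n : negf n = 1%nat -> Q2R (qenum n) < 0.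
Proof.
  intros H. rewrite qenum_val. unfold negf, evn, sgf in H.
  destruct (Nat.even (qs n)); simpl in H; try lia. destruct (qm n) eqn:E; simpl in H; try lia.
  pose proof (INR_S_pos (qb n)). pose proof (INR_S_pos n0).
  unfold Rdiv. rewrite Ropp_mult_distr_l_reverse. apply Ropp_lt_gt_0_contravar.
  apply Rmult_lt_0_compat; auto. apply Rinv_0_lt_compat; auto.
Qed.

Section Q.
Variable o : nat -> bool.
Lemma C1_qb : K1 o qb. Proof. exact (C1_osnd o). Qed.
Lemma C1_qm : K1 o qm. Proof. exact (comp1 o in1 _ _ (C1_osnd o) (C1_ofst o)). Qed.
Lemma C1_qs : K1 o qs. Proof. exact (comp1 o in1 _ _ (C1_ofst o) (C1_ofst o)). Qed.
Lemma C1_negf : K1 o negf.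
Proof.
  exact (comp2 o in1 _ _ _ (C2_mul o) (comp2 o in1 _ _ _ (C2_sub o) (Cg_const o in1 1)
     (comp1 o in1 _ _ (C1_evn o) C1_qs)) (comp1 o in1 _ _ (C1_sg o) C1_qm)).
Qed.
Lemma C2_idx : K2 o idx.
Proof.
  exact (comp2 o in2 _ _ _ (C2_tonat o) (comp2 o in2 _ _ _ (C2_tonat o) (Cg_const o in2 0) (C2_p0 o))
           (C2_p1 o)).
Qed.
End Q.

End M5.
Import M5.

Module M6.
Open Scope R_scope.

Lemma INR_pow4 k : INR (4 ^ k) = 4 ^ k.
Proof. rewrite pow_INR. replace (INR 4) with 4 by (simpl; lra). reflexivity. Qed.

Lemma dec_key S i :
  cut (val S) (idx (8 * natM S i + 1) (2 * 4 ^ (Datatypes.S i) - 1)) = S i.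
Proof.
  unfold cut. rewrite qenum_idx.
  replace (Datatypes.S (2 * 4 ^ Datatypes.S i - 1)) with (2 * 4 ^ Datatypes.S i)%nat
    by (pose proof (Nat.pow_nonzero 4 (Datatypes.S i)); lia).
  rewrite plus_INR, !mult_INR, INR_pow4.
  rewrite (val_split S i), rtail_rec.
  pose proof (rtail_bounds S (Datatypes.S i)). pose proof (pow4_pos i).
  unfold term. replace (INR 8) with 8 by (simpl; lra). replace (INR 2) with 2 by (simpl; lra). replace (INR 1) with 1 by reflexivity.
  set (M := INR (natM S i)). assert (0 <= M) by apply pos_INR.
  destruct (S i); simpl b2n; simpl INR.
  - destruct (Rlt_dec _ _) as [|Hn]; auto. exfalso. apply Hn.
    simpl pow in *. apply Rminus_lt_0.
    replace (M / 4 ^ i + (1 / (4 * 4 ^ i) + rtail S (Datatypes.S i)) - (8 * M + 1) / (2 * (4 * 4 ^ i)))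
      with (1 / (8 * 4 ^ i) + rtail S (Datatypes.S i)) by (field; lra).
    assert (0 < 1 / (8 * 4 ^ i)) by (apply Rdiv_lt_0_compat; lra). lra.
  - destruct (Rlt_dec _ _) as [Hl|]; auto. exfalso. revert Hl.
    simpl pow in *. apply Rle_not_lt. apply Rminus_le_0.
    replace ((8 * M + 1) / (2 * (4 * 4 ^ i)) - (M / 4 ^ i + (0 / (4 * 4 ^ i) + rtail S (Datatypes.S i))))
      with (1 / (8 * 4 ^ i) - rtail S (Datatypes.S i)) by (field; lra).
    replace (/ (4 * 4 ^ i) / 3) with (1 / (12 * 4 ^ i)) in H by (field; lra).
    assert (1 / (12 * 4 ^ i) <= 1 / (8 * 4 ^ i)).
    { unfold Rdiv. rewrite !Rmult_1_l. apply Rinv_le_contravar; lra. }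
    lra.
Qed.

Lemma decode S : turing_le S (cut (val S)).
Proof.
  set (o := cut (val S)).
  set (g := fun i M => (4 * M + b2n (o (idx (8 * M + 1) (2 * 4 ^ (Datatypes.S i) - 1))))%nat).
  assert (Cg : K2 o g).
  { unfold g. exact (comp2 o in2 _ _ _ (C2_add o) (comp2 o in2 _ _ _ (C2_mul o) (Cg_const o in2 4) (C2_p1 o))
      (comp1 o in2 _ _ (C1_orc o) (comp2 o in2 _ _ _ (C2_idx o)
          (comp2 o in2 _ _ _ (C2_add o) (comp2 o in2 _ _ _ (C2_mul o) (Cg_const o in2 8) (C2_p1 o)) (Cg_const o in2 1))
          (comp2 o in2 _ _ _ (C2_sub o) (comp2 o in2 _ _ _ (C2_mul o) (Cg_const o in2 2)
                (comp1 o in2 _ _ (C1_pow4 o) (comp1 o in2 _ _ (C1_succ o) (C2_p0 o)))) (Cg_const o in2 1))))). }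
  pose proof (prec1 o 0 g Cg) as CM.
  assert (EM : forall n, nat_rec (fun _ => nat) 0%nat g n = natM S n).
  { induction n; auto. simpl. rewrite IHn. unfold g. unfold o. rewrite dec_key. reflexivity. }
  assert (C : K1 o (fun i => b2n (o (idx (8 * natM S i + 1) (2 * 4 ^ (Datatypes.S i) - 1))))).
  { eapply Cg_ext.
    exact (comp1 o in1 _ _ (C1_orc o) (comp2 o in1 _ _ _ (C2_idx o)
          (comp2 o in1 _ _ _ (C2_add o) (comp2 o in1 _ _ _ (C2_mul o) (Cg_const o in1 8) CM) (Cg_const o in1 1))
          (comp2 o in1 _ _ _ (C2_sub o) (comp2 o in1 _ _ _ (C2_mul o) (Cg_const o in1 2)
                (comp1 o in1 _ _ (C1_pow4 o) (comp1 o in1 _ _ (C1_succ o) (C1_id o)))) (Cg_const o in1 1)))).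
    intros i. simpl. rewrite EM. reflexivity. }
  eapply Cg_ext. exact C. intros i. unfold o. rewrite dec_key. reflexivity.
Qed.

End M6.
Import M6.

Module M7.
Open Scope R_scope.

Lemma frac_lt a b c d : 0 < b -> 0 < d -> (a / b < c / d <-> a * d < c * b).
Proof.
  intros Hb Hd. split; intro H.
  - replace (a * d) with (a / b * (b * d)) by (field; lra).
    replace (c * b) with (c / d * (b * d)) by (field; lra).
    apply Rmult_lt_compat_r; auto. apply Rmult_lt_0_compat; auto.
  - replace (a / b) with (a * d * / (b * d)) by (field; lra).
    replace (c / d) with (c * b * / (b * d)) by (field; lra).
    apply Rmult_lt_compat_r; auto. apply Rinv_0_lt_compat, Rmult_lt_0_compat; auto.
Qed.

Lemma frac_le a b c d : 0 < b -> 0 < d -> (a / b <= c / d <-> a * d <= c * b).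
Proof.
  intros Hb Hd. pose proof (frac_lt c d a b Hd Hb). split; intro H1.
  - destruct (Rle_lt_dec (a * d) (c * b)); auto. exfalso. apply H in r. lra.
  - destruct (Rle_lt_dec (a / b) (c / d)); auto. exfalso. apply H in r. lra.
Qed.

Lemma val_nonneg S : 0 <= val S.
Proof. rewrite (val_split S 0). pose proof (rtail_bounds S 0). simpl. lra. Qed.

Lemma small_pow d : 0 < d -> exists k, / 4 ^ k < d.
Proof.
  intros Hd. destruct (pow_lt_1_zero (/ 4) ltac:(rewrite Rabs_right; lra) d Hd) as [N HN].
  exists N. specialize (HN N (le_n _)). rewrite Rabs_right in HN.
  - rewrite Rinv_pow by lra. auto.
  - apply Rle_ge, pow_le; lra.
Qed.

Section Enc.
Variable S : nat -> bool.
Variables (e : bool) (m0 b0 : nat).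

Definition ltf k n := sgf (negf n + b2n (qm n * 4 ^ k <? natM S k * Datatypes.S (qb n)))%nat.
Definition gef k n := ((1 - negf n) *
   b2n ((3 * natM S k + 1) * Datatypes.S (qb n) <=? qm n * (3 * 4 ^ k)))%nat.
Definition eqf n := (b2n e * ((1 - negf n) * b2n (qm n * Datatypes.S b0 =? m0 * Datatypes.S (qb n))))%nat.
Definition ff k n := (1 - sgf (eqf n + ltf k n + gef k n))%nat.

Let q n := Q2R (qenum n).
Let P k := INR (natM S k) / 4 ^ k.
Let U k := P k + / 4 ^ k / 3.

Lemma INR_nat_lt x y : (x < y)%nat -> INR x < INR y.
Proof. apply lt_INR. Qed.

Lemma lt_1 k n : ltf k n <> 0%nat -> q n < P k.
Proof.
  unfold ltf, q, P. intros H. destruct (negf_01 n) as [N|N].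
  - rewrite (negf_0 n N). rewrite N in H. simpl in H.
    destruct (Nat.ltb_spec (qm n * 4 ^ k) (natM S k * Datatypes.S (qb n))); simpl in H; try lia.
    apply frac_lt. apply INR_S_pos. apply pow4_pos.
    rewrite <- INR_pow4, <- !mult_INR. apply lt_INR; auto.
  - pose proof (negf_1 n N). pose proof (pos_INR (natM S k)). pose proof (pow4_pos k).
    assert (0 <= INR (natM S k) / 4 ^ k) by (apply Rdiv_le_0_compat; lra). lra.
Qed.

Lemma lt_0 k n : ltf k n = 0%nat -> P k <= q n.
Proof.
  unfold ltf, q, P. intros H. destruct (negf_01 n) as [N|N]; rewrite N in H; simpl in H.
  - rewrite (negf_0 n N).
    destruct (Nat.ltb_spec (qm n * 4 ^ k) (natM S k * Datatypes.S (qb n))); simpl in H; try lia.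
    apply frac_le. apply pow4_pos. apply INR_S_pos.
    rewrite <- INR_pow4, <- !mult_INR. apply le_INR; lia.
  - lia.
Qed.

Lemma ge_1 k n : gef k n <> 0%nat -> U k <= q n.
Proof.
  unfold gef, q, U, P. intros H.
  destruct (Nat.leb_spec ((3 * natM S k + 1) * Datatypes.S (qb n)) (qm n * (3 * 4 ^ k)));
  destruct (negf_01 n) as [N|N]; rewrite N in H; simpl in H; try lia.
  rewrite (negf_0 n N).
  pose proof (pow4_pos k).
  replace (INR (natM S k) / 4 ^ k + / 4 ^ k / 3) with (INR (3 * natM S k + 1) / INR (3 * 4 ^ k)).
  2:{ rewrite plus_INR, !mult_INR, INR_pow4. simpl (INR 1). replace (INR 3) with 3 by (simpl; lra).
      field. lra. }
  apply frac_le. rewrite mult_INR, INR_pow4. replace (INR 3) with 3 by (simpl; lra). lra.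
  apply INR_S_pos. rewrite <- !mult_INR. apply le_INR; lia.
Qed.

Lemma ge_0 k n : gef k n = 0%nat -> q n < U k.
Proof.
  unfold gef, q, U, P. intros H. pose proof (pow4_pos k). destruct (negf_01 n) as [N|N].
  - rewrite (negf_0 n N).
    destruct (Nat.leb_spec ((3 * natM S k + 1) * Datatypes.S (qb n)) (qm n * (3 * 4 ^ k)));
      rewrite N in H; simpl in H; try lia.
    replace (INR (natM S k) / 4 ^ k + / 4 ^ k / 3) with (INR (3 * natM S k + 1) / INR (3 * 4 ^ k)).
    2:{ rewrite plus_INR, !mult_INR, INR_pow4. simpl (INR 1). replace (INR 3) with 3 by (simpl; lra).
        field. lra. }
    apply frac_lt. apply INR_S_pos. rewrite mult_INR, INR_pow4. replace (INR 3) with 3 by (simpl; lra). lra.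
    rewrite <- !mult_INR. apply lt_INR; lia.
  - pose proof (negf_1 n N). pose proof (pos_INR (natM S k)).
    assert (0 <= INR (natM S k) / 4 ^ k) by (apply Rdiv_le_0_compat; lra).
    assert (0 < / 4 ^ k / 3) by (apply Rdiv_lt_0_compat; [apply Rinv_0_lt_compat|]; lra). lra.
Qed.

Lemma eq_1 n : eqf n <> 0%nat -> e = true /\ q n = INR m0 / INR (Datatypes.S b0).
Proof.
  unfold eqf, q. intros H.
  destruct (Nat.eqb_spec (qm n * Datatypes.S b0) (m0 * Datatypes.S (qb n)));
  destruct e; destruct (negf_01 n) as [N|N]; rewrite N in H; simpl in H; try lia. split; auto.
  rewrite (negf_0 n N).
  apply Rle_antisym; apply frac_le; try apply INR_S_pos; rewrite <- !mult_INR; apply le_INR; lia.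
Qed.

Lemma eq_0 n : eqf n = 0%nat -> e = true -> q n <> INR m0 / INR (Datatypes.S b0).
Proof.
  unfold eqf, q. intros H He. rewrite He in H. destruct (negf_01 n) as [N|N].
  - rewrite (negf_0 n N).
    destruct (Nat.eqb_spec (qm n * Datatypes.S b0) (m0 * Datatypes.S (qb n))); rewrite N in H; simpl in H; try lia.
    intros E. apply n0. apply INR_eq. rewrite !mult_INR.
    assert (E1 : INR (qm n) / INR (Datatypes.S (qb n)) <= INR m0 / INR (Datatypes.S b0)) by lra.
    assert (E2 : INR m0 / INR (Datatypes.S b0) <= INR (qm n) / INR (Datatypes.S (qb n))) by lra.
    apply (frac_le _ _ _ _ (INR_S_pos _) (INR_S_pos _)) in E1.
    apply (frac_le _ _ _ _ (INR_S_pos _) (INR_S_pos _)) in E2. lra.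
  - pose proof (negf_1 n N). pose proof (pos_INR m0). pose proof (INR_S_pos b0).
    assert (0 <= INR m0 / INR (Datatypes.S b0)) by (apply Rdiv_le_0_compat; lra). lra.
Qed.

Hypothesis Htrue : e = true -> val S = INR m0 / INR (Datatypes.S b0).
Hypothesis Hfalse : e = false -> forall m b, val S <> INR m / INR (Datatypes.S b).

Lemma val_in k : P k <= val S <= U k.
Proof. unfold U, P. rewrite (val_split S k). pose proof (rtail_bounds S k). lra. Qed.

Lemma term_ex n : eqf n = 0%nat -> exists k, ltf k n <> 0%nat \/ gef k n <> 0%nat.
Proof.
  intros H. apply NNPP. intros Hn.
  assert (A : forall k, P k <= q n < U k).
  { intros k. split.
    - apply lt_0. destruct (Nat.eq_dec (ltf k n) 0); auto. exfalso; eauto.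
    - apply ge_0. destruct (Nat.eq_dec (gef k n) 0); auto. exfalso; eauto. }
  assert (Eq : q n = val S).
  { destruct (Req_dec (q n) (val S)) as [|D]; auto. exfalso.
    destruct (small_pow (Rabs (q n - val S))) as [k Hk]. apply Rabs_pos_lt. lra.
    specialize (A k). pose proof (val_in k). unfold U in *.
    pose proof (pow4_pos k). assert (0 < / 4 ^ k) by (apply Rinv_0_lt_compat; lra).
    revert Hk. apply Rle_not_lt. apply Rabs_le. lra. }
  destruct e eqn:Ee.
  - apply (eq_0 n H Ee). rewrite Eq. auto.
  - destruct (negf_01 n) as [N|N].
    + apply (Hfalse eq_refl (qm n) (qb n)). rewrite <- Eq. unfold q. apply negf_0; auto.
    + pose proof (negf_1 n N). pose proof (val_nonneg S). unfold q in Eq. lra.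
Qed.

Lemma C2_ltf : K2 S ltf.
Proof.
  assert (CM : K1 S (natM S)).
  { exact (prec1 S 0 (fun k M => 4 * M + b2n (S k))%nat (comp2 S in2 _ _ _ (C2_add S)
       (comp2 S in2 _ _ _ (C2_mul S) (Cg_const S in2 4) (C2_p1 S)) (comp1 S in2 _ _ (C1_orc S) (C2_p0 S)))). }
  unfold ltf. exact (comp1 S in2 _ _ (C1_sg S) (comp2 S in2 _ _ _ (C2_add S)
      (comp1 S in2 _ _ (C1_negf S) (C2_p1 S))
      (comp2 S in2 _ _ _ (C2_ltb S)
          (comp2 S in2 _ _ _ (C2_mul S) (comp1 S in2 _ _ (C1_qm S) (C2_p1 S)) (comp1 S in2 _ _ (C1_pow4 S) (C2_p0 S)))
          (comp2 S in2 _ _ _ (C2_mul S) (comp1 S in2 _ _ CM (C2_p0 S))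
              (comp1 S in2 _ _ (C1_succ S) (comp1 S in2 _ _ (C1_qb S) (C2_p1 S))))))).
Qed.
End Enc.

End M7.
Import M7.

Module M8.
Open Scope R_scope.

Lemma C1_natM S : K1 S (natM S).
Proof.
  exact (prec1 S 0 (fun k M => 4 * M + b2n (S k))%nat (comp2 S in2 _ _ _ (C2_add S)
       (comp2 S in2 _ _ _ (C2_mul S) (Cg_const S in2 4) (C2_p1 S)) (comp1 S in2 _ _ (C1_orc S) (C2_p0 S)))).
Qed.

Lemma C2_gef S : K2 S (gef S).
Proof.
  unfold gef. exact (comp2 S in2 _ _ _ (C2_mul S)
     (comp2 S in2 _ _ _ (C2_sub S) (Cg_const S in2 1) (comp1 S in2 _ _ (C1_negf S) (C2_p1 S)))
     (comp2 S in2 _ _ _ (C2_leb S)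
        (comp2 S in2 _ _ _ (C2_mul S)
           (comp2 S in2 _ _ _ (C2_add S) (comp2 S in2 _ _ _ (C2_mul S) (Cg_const S in2 3)
                (comp1 S in2 _ _ (C1_natM S) (C2_p0 S))) (Cg_const S in2 1))
           (comp1 S in2 _ _ (C1_succ S) (comp1 S in2 _ _ (C1_qb S) (C2_p1 S))))
        (comp2 S in2 _ _ _ (C2_mul S) (comp1 S in2 _ _ (C1_qm S) (C2_p1 S))
           (comp2 S in2 _ _ _ (C2_mul S) (Cg_const S in2 3) (comp1 S in2 _ _ (C1_pow4 S) (C2_p0 S)))))).
Qed.

Lemma C1_eqf S e m0 b0 : K1 S (eqf e m0 b0).
Proof.
  unfold eqf. exact (comp2 S in1 _ _ _ (C2_mul S) (Cg_const S in1 (b2n e))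
    (comp2 S in1 _ _ _ (C2_mul S)
     (comp2 S in1 _ _ _ (C2_sub S) (Cg_const S in1 1) (C1_negf S))
     (comp2 S in1 _ _ _ (C2_eqb S)
        (comp2 S in1 _ _ _ (C2_mul S) (C1_qm S) (Cg_const S in1 (Datatypes.S b0)))
        (comp2 S in1 _ _ _ (C2_mul S) (Cg_const S in1 m0) (comp1 S in1 _ _ (C1_succ S) (C1_qb S)))))).
Qed.

Lemma C2_ff S e m0 b0 : K2 S (ff S e m0 b0).
Proof.
  unfold ff. exact (comp2 S in2 _ _ _ (C2_sub S) (Cg_const S in2 1)
    (comp1 S in2 _ _ (C1_sg S) (comp2 S in2 _ _ _ (C2_add S)
       (comp2 S in2 _ _ _ (C2_add S) (comp1 S in2 _ _ (C1_eqf S e m0 b0) (C2_p1 S)) (C2_ltf S))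
       (C2_gef S)))).
Qed.

Lemma sgf_pos n : (0 < n)%nat -> sgf n = 1%nat.
Proof. destruct n; simpl; auto; lia. Qed.
Lemma sgf_01 n : sgf n = 0%nat \/ sgf n = 1%nat.
Proof. destruct n; simpl; auto. Qed.
Lemma b2n_01 b : b2n b = 0%nat \/ b2n b = 1%nat.
Proof. destruct b; simpl; auto. Qed.

Lemma encode S : turing_le (cut (val S)) S.
Proof.
  assert (Ch : exists e m0 b0, (e = true -> val S = INR m0 / INR (Datatypes.S b0)) /\
                (e = false -> forall m b, val S <> INR m / INR (Datatypes.S b))).
  { destruct (classic (exists m b, val S = INR m / INR (Datatypes.S b))) as [[m [b H]]|H].
    - exists true, m, b. split; [auto| intros X; discriminate X].
    - exists false, 0%nat, 0%nat. split; [intros X; discriminate X|]. intros _ m' b' E. apply H; eauto. }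
  destruct Ch as [e [m0 [b0 [Ht Hf]]]].
  destruct (mu1 S (ff S e m0 b0) (C2_ff S e m0 b0)) as [K [CK HK]].
  { intros n. destruct (Nat.eq_dec (eqf e m0 b0 n) 0) as [E|E].
    - destruct (term_ex S e m0 b0 Ht Hf n E) as [k Hk]. exists k. unfold ff.
      rewrite sgf_pos; [reflexivity|lia].
    - exists 0%nat. unfold ff. rewrite sgf_pos; [reflexivity|lia]. }
  assert (Cout : K1 S (fun n => (1 - eqf e m0 b0 n) * ltf S (K n) n)%nat).
  { exact (comp2 S in1 _ _ _ (C2_mul S) (comp2 S in1 _ _ _ (C2_sub S) (Cg_const S in1 1) (C1_eqf S e m0 b0))
      (comp2 S in1 _ _ _ (C2_ltf S) CK (C1_id S))). }
  eapply Cg_ext. exact Cout. intros n. simpl.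
  assert (E01 : eqf e m0 b0 n = 0%nat \/ eqf e m0 b0 n = 1%nat).
  { unfold eqf. destruct (b2n_01 e) as [X|X]; rewrite X; [lia|].
    destruct (negf_01 n) as [Y|Y]; rewrite Y; [|lia]. destruct (b2n_01 (qm n * Datatypes.S b0 =? m0 * Datatypes.S (qb n))) as [Z|Z]; rewrite Z; lia. }
  unfold cut. destruct E01 as [E|E].
  - rewrite E. destruct (HK n) as [H0 _]. unfold ff in H0.
    assert (L01 : ltf S (K n) n = 0%nat \/ ltf S (K n) n = 1%nat) by (unfold ltf; apply sgf_01).
    destruct L01 as [L|L]; rewrite L.
    + assert (G : gef S (K n) n <> 0%nat).
      { intros G. rewrite E, L, G in H0. simpl in H0. lia. }
      apply ge_1 in G. pose proof (val_in S (K n)).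
      destruct (Rlt_dec _ _); [lra|reflexivity].
    + assert (L1 := lt_1 S (K n) n ltac:(lia)). pose proof (val_in S (K n)).
      destruct (Rlt_dec _ _); [reflexivity|]. exfalso. lra.
  - rewrite E. simpl. destruct (eq_1 e m0 b0 n) as [He Hq]; [lia|].
    rewrite <- (Ht He) in Hq. destruct (Rlt_dec _ _); [|reflexivity]. exfalso. lra.
Qed.

End M8.
Import M8.

Module M9.
Open Scope R_scope.

Lemma even_2n n : Nat.even (2 * n) = true.
Proof. rewrite Nat.even_mul. reflexivity. Qed.
Lemma even_2n1 n : Nat.even (Datatypes.S (2 * n)) = false.
Proof. rewrite Nat.even_succ, <- Nat.negb_even, even_2n. reflexivity. Qed.
Lemma div2_2n n : Nat.div2 (2 * n) = n.
Proof. apply Nat.div2_double. Qed.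
Lemma div2_2n1 n : Nat.div2 (Datatypes.S (2 * n)) = n.
Proof. apply Nat.div2_succ_double. Qed.

Lemma le_J_l A B : turing_le A (Jn A B).
Proof.
  set (o := Jn A B).
  eapply Cg_ext. exact (comp1 o in1 _ _ (C1_orc o)
     (comp2 o in1 _ _ _ (C2_mul o) (Cg_const o in1 2) (C1_id o))).
  intros n. cbv beta. unfold o, Jn. rewrite even_2n, div2_2n. reflexivity.
Qed.

Lemma le_J_r A B : turing_le B (Jn A B).
Proof.
  set (o := Jn A B).
  eapply Cg_ext. exact (comp1 o in1 _ _ (C1_orc o) (comp1 o in1 _ _ (C1_succ o)
     (comp2 o in1 _ _ _ (C2_mul o) (Cg_const o in1 2) (C1_id o)))).
  intros n. cbv beta. unfold o, Jn. rewrite even_2n1, div2_2n1. reflexivity.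
Qed.

Lemma J_le A B C : turing_le A C -> turing_le B C -> turing_le (Jn A B) C.
Proof.
  intros HA HB.
  eapply Cg_ext. exact (comp2 C in1 _ _ _ (C2_add C)
    (comp2 C in1 _ _ _ (C2_mul C) (C1_evn C) (comp1 C in1 _ _ HA (C1_div2 C)))
    (comp2 C in1 _ _ _ (C2_mul C) (comp2 C in1 _ _ _ (C2_sub C) (Cg_const C in1 1) (C1_evn C))
        (comp1 C in1 _ _ HB (C1_div2 C)))).
  intros n. simpl. unfold Jn, evn. destruct (Nat.even n); simpl; lia.
Qed.

Lemma Zs_le C : turing_le Zs C.
Proof. exact (Cg_const C in1 0). Qed.

Lemma val_eqv S : turing_eqv (cut (val S)) S.
Proof. split; [apply encode|apply decode]. Qed.

Lemma teqv_trans A B C : turing_eqv A B -> turing_eqv B C -> turing_eqv A C.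
Proof. intros [H1 H2] [H3 H4]; split; eapply turing_le_trans; eauto. Qed.
Lemma teqv_sym A B : turing_eqv A B -> turing_eqv B A.
Proof. intros [H1 H2]; split; auto. Qed.

Lemma J_eqv_r A B : turing_le A B -> turing_eqv (Jn A B) B.
Proof. intros H. split. apply J_le; auto. apply turing_le_refl. apply le_J_r. Qed.
Lemma J_eqv_l A : turing_eqv (Jn A Zs) A.
Proof. split. apply J_le. apply turing_le_refl. apply Zs_le. apply le_J_l. Qed.

Section Main.
Variable F : R -> Prop.
Hypothesis Hsub : is_subfield F.
Hypothesis Hcl : closed_under_turing_eqv F.

Lemma F_sub x y : F x -> F y -> F (x + - y).
Proof.
  destruct Hsub as [_ [_ [Hadd [Hopp _]]]]. intros. apply Hadd; auto.
Qed.

Lemma F_val y S : F y -> turing_eqv (cut y) S -> F (val S).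
Proof.
  intros Fy E. apply (Hcl y); auto. unfold real_turing_eqv.
  apply (teqv_trans _ S). auto. apply teqv_sym, val_eqv.
Qed.

Lemma DC x y : F y -> real_turing_le x y -> F x.
Proof.
  intros Fy Hle.
  set (A := cut x). set (B := cut y).
  assert (F1 : F (val (Jn A B))).
  { apply (F_val y). auto. apply teqv_sym, J_eqv_r. exact Hle. }
  assert (F2 : F (val (Jn Zs B))).
  { apply (F_val y). auto. apply teqv_sym, J_eqv_r. apply Zs_le. }
  assert (F3 : F (val (Jn A Zs))).
  { replace (val (Jn A Zs)) with (val (Jn A B) + - val (Jn Zs B)).
    apply F_sub; auto. rewrite (val_J A B). ring. }
  apply (Hcl _ x F3). unfold real_turing_eqv.
  apply (teqv_trans _ (Jn A Zs)). apply val_eqv. apply J_eqv_l.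
Qed.

Definition ub (y1 y2 : R) : R := val (Jn (cut y1) (cut y2)).

Lemma ub_F y1 y2 : F y1 -> F y2 -> F (ub y1 y2).
Proof.
  intros F1 F2. unfold ub. rewrite val_J.
  destruct Hsub as [_ [_ [Hadd _]]]. apply Hadd.
  - apply (F_val y1); auto. apply teqv_sym, J_eqv_l.
  - apply (F_val y2); auto. apply teqv_sym, J_eqv_r, Zs_le.
Qed.

Lemma ub_le1 y1 y2 : real_turing_le y1 (ub y1 y2).
Proof. unfold real_turing_le, ub. eapply turing_le_trans. apply le_J_l. apply decode. Qed.
Lemma ub_le2 y1 y2 : real_turing_le y2 (ub y1 y2).
Proof. unfold real_turing_le, ub. eapply turing_le_trans. apply le_J_r. apply decode. Qed.

End Main.


End M9.
Import M9.
Theorem mainTheorem19 (F : R -> Prop) :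
  is_subfield F -> countable_set F -> closed_under_turing_eqv F ->
  exists C : ((nat -> bool) -> Prop) -> Prop,
    (forall D, C D -> is_degree D) /\
    (forall D1 D2, C D1 -> C D2 -> degree_le D1 D2 \/ degree_le D2 D1) /\
    (forall x : R, F x <-> reals_below C x).
Proof.
  intros Hsub [e He] Hcl.
  set (z := fix z (n : nat) : R := match n with 0%nat => e 0%nat | Datatypes.S k => ub (z k) (e (Datatypes.S k)) end).
  assert (Fz : forall n, F (z n)).
  { induction n; simpl. apply He; eauto. apply ub_F; auto. apply He; eauto. }
  assert (ez : forall n, real_turing_le (e n) (z n)).
  { intros [|n]; simpl. apply turing_le_refl. apply ub_le2. }
  assert (zz : forall n m, (n <= m)%nat -> real_turing_le (z n) (z m)).
  { intros n m H; induction H. apply turing_le_refl.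
    eapply turing_le_trans. apply IHle. simpl. apply ub_le1. }
  exists (fun D => exists n, forall B, D B <-> turing_eqv B (cut (z n))).
  split; [|split].
  - intros D [n Hn]. exists (cut (z n)). exact Hn.
  - intros D1 D2 [n Hn] [m Hm].
    assert (R1 : D1 (cut (z n))) by (apply Hn; split; apply turing_le_refl).
    assert (R2 : D2 (cut (z m))) by (apply Hm; split; apply turing_le_refl).
    destruct (Nat.le_ge_cases n m) as [L|L].
    + apply or_introl. exists (cut (z n)), (cut (z m)). split; [exact R1|split; [exact R2|]]. apply zz; exact L.
    + apply or_intror. exists (cut (z m)), (cut (z n)). split; [exact R2|split; [exact R1|]]. apply zz; exact L.
  - intros x. split.
    + intros Fx. apply He in Fx. destruct Fx as [n En]. subst x.
      exists (fun B => turing_eqv B (cut (z n))). split.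
      * exists n. tauto.
      * exists (z n). split. split; apply turing_le_refl. apply ez.
    + intros [D [[n Hn] [y [Dy Hxy]]]].
      apply Hn in Dy. apply (DC F Hsub Hcl x (z n) (Fz n)).
      unfold real_turing_le in *. eapply turing_le_trans. exact Hxy. apply Dy.
Qed.
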